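(* Let $\mathbf v=(v_1,\dots,v_m)$ and $\mathbf k=(k_1,\dots,k_m)$ be $m$-tuples of positive integers with $k_i\le v_i$ for all $i$, and let $v_{\max}=\max_i v_i$ and $k_{\min}=\min_i k_i$. Suppose there is an index $i$ with $v_i=v_{\max}$ and $k_i=k_{\min}\ge2$. Then $C(\mathbf v,\mathbf k,2)=C(v_{\max},k_{\min},2)$.
   Context: Let $X_1,\dots,X_m$ be pairwise disjoint sets with $|X_i|=v_i$. A block is an $m$-tuple $(B_1,\dots,B_m)$ with $B_i\subseteq X_i$, $|B_i|=k_i$. An $m$-tuple of sets $(T_1,\dots,T_m)$ is $(\mathbf v,\mathbf k,2)$-admissible if $T_i\subseteq X_i$, $|T_i|\le k_i$ and $\sum|T_i|=2$; it is contained in a block if $T_i\subseteq B_i$ for all $i$. A ${\rm GC}(\mathbf v,\mathbf k,2)$ is a finite family (repetitions allowed) of blocks containing every admissible tuple in at least one block; $C(\mathbf v,\mathbf k,2)$ is the minimum number of blocks. For integers $v\ge k\ge2$, $C(v,k,2)$ is the ordinary covering number: the minimum number of $k$-subsets of a $v$-set such that every $2$-subset is contained in at least one of them. *)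

(* Defs.v *)
From mathcomp Require Import all_boot.
Unset Printing Implicit Defensive.

Definition is_cover (v k : nat) (F : seq {set 'I_v}) : Prop :=
  (forall B, B \in F -> #|B| = k) /\
  (forall P : {set 'I_v}, #|P| = 2 -> exists2 B, B \in F & P \subset B).

Definition is_covering_number (v k c : nat) : Prop :=
  (exists F : seq {set 'I_v}, size F = c /\ is_cover v k F) /\
  (forall F : seq {set 'I_v}, is_cover v k F -> c <= size F).

(* The disjoint union X_1 u ... u X_m with X_i = 'I_(v i); an element is a pair
   (i, x) with x : 'I_(v i).  Subsets of the ground set correspond exactly to
   m-tuples (T_1,...,T_m) with T_i subset of X_i. *)
Definition ground {m : nat} (v : 'I_m -> nat) : finType :=
  {i : 'I_m & 'I_(v i)}.

Definition part {m : nat} {v : 'I_m -> nat} (A : {set ground v}) (i : 'I_m)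
  : {set ground v} := [set x in A | tag x == i].

Definition is_block {m : nat} (v k : 'I_m -> nat) (B : {set ground v}) : Prop :=
  forall i, #|part B i| = k i.

Definition admissible {m : nat} (v k : 'I_m -> nat) (T : {set ground v}) : Prop :=
  (forall i, #|part T i| <= k i) /\ #|T| = 2.

(* A GC(v,k,2): a family of blocks containing every admissible tuple in at
   least one block (containment T_i subset B_i for all i is T \subset B). *)
Definition is_GC {m : nat} (v k : 'I_m -> nat) (F : seq {set ground v}) : Prop :=
  (forall B, B \in F -> is_block v k B) /\
  (forall T, admissible v k T -> exists2 B, B \in F & T \subset B).

Definition is_GC_number {m : nat} (v k : 'I_m -> nat) (c : nat) : Prop :=
  (exists F : seq {set ground v}, size F = c /\ is_GC v k F) /\
  (forall F : seq {set ground v}, is_GC v k F -> c <= size F).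

(* Main.v *)
Require Import Defs.
From mathcomp Require Import all_boot.
From Stdlib Require Import Classical.

Lemma ext_set (T : finType) (S : {set T}) k :
  #|S| <= k -> k <= #|T| -> exists B : {set T}, (S \subset B) && (#|B| == k).
Proof.
move=> h1; have [n ->] : exists n, k = #|S| + n by exists (k - #|S|); rewrite subnKC.
clear h1; elim: n S => [|n IH] S h2; first by exists S; rewrite addn0 subxx eqxx.
have lt : #|S| < #|T| by rewrite addnS in h2; exact: leq_ltn_trans (leq_addr n #|S|) h2.
case/boolP: [exists x, x \notin S] => [/existsP[x xS]|].
  have [B /andP[sB cB]] : exists B : {set T}, (x |: S \subset B) && (#|B| == #|x |: S| + n).
    apply: IH; by rewrite cardsU1 xS add1n addSn -addnS.
  exists B; rewrite (eqP cB) cardsU1 xS add1n addSn -addnS eqxx andbT.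
  by apply: subset_trans sB; apply: subsetUr.
rewrite negb_exists => /forallP H.
have : S = setT by apply/setP => x; rewrite inE; move: (H x); rewrite negbK.
by move=> E; rewrite E cardsT ltnn in lt.
Qed.

Lemma min_exists (P : nat -> Prop) n : P n -> exists c, P c /\ forall m, P m -> c <= m.
Proof.
elim: n {-2}n (leqnn n) => [|N IH] n le Pn.
  exists n; split => // m _; move: le; rewrite leqn0 => /eqP ->; done.
destruct (classic (exists m, m < n /\ P m)) as [[m [lm Pm]]|NE].
  apply: (IH m) => //; exact: leq_trans lm le.
exists n; split => // m Pm; rewrite leqNgt; apply/negP => lm; apply: NE; by exists m.
Qed.

Definition inj {m : nat} (v : 'I_m -> nat) (i : 'I_m) (y : 'I_(v i)) : ground v :=
  existT (fun j => 'I_(v j)) i y.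

Lemma inj_inj {m : nat} (v : 'I_m -> nat) i : injective (@inj m v i).
Proof.
move=> y1 y2 /(congr1 (tagged_as (inj v i y1))).
by rewrite /inj !tagged_asE.
Qed.

Lemma part_inj {m : nat} (v : 'I_m -> nat) (A : {set ground v}) i :
  part A i = inj v i @: [set y | inj v i y \in A].
Proof.
apply/setP => x; rewrite /part inE.
apply/andP/imsetP.
  case: x => j y /= [xA /eqP E]; subst j.
  by exists y => //; rewrite inE.
by case=> y; rewrite inE => yA ->; split => //.
Qed.

Lemma card_part_inj {m : nat} (v : 'I_m -> nat) (A : {set ground v}) i :
  #|part A i| = #|[set y | inj v i y \in A]|.
Proof. by rewrite part_inj card_imset //; apply: inj_inj. Qed.

Lemma gc_to_cover {m : nat} (v k : 'I_m -> nat) (i0 : 'I_m) (F : seq {set ground v}) :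
  (forall i, k i0 <= k i) -> 2 <= k i0 -> is_GC v k F ->
  is_cover (v i0) (k i0) (map (fun B : {set ground v} => [set y | inj v i0 y \in B]) F).
Proof.
move=> hk h2 [Fb Fc]; split.
  by move=> B' /mapP[B BF ->]; rewrite -card_part_inj; apply: Fb.
move=> P cP; set T := inj v i0 @: P.
have cT : #|T| = 2 by rewrite card_imset //; apply: inj_inj.
have [|B BF TB] := Fc T.
  split => // i; apply: leq_trans (leq_trans h2 (hk i)).
  by rewrite -cT; apply: subset_leq_card; apply/subsetP => x; rewrite inE => /andP[].
exists [set y | inj v i0 y \in B]; first by apply: map_f.
by apply/subsetP => y yP; rewrite inE; apply: (subsetP TB); apply: imset_f.
Qed.

Lemma cover_pairs (V K : nat) (F : seq {set 'I_V}) : 2 <= V -> is_cover V K F ->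
  forall x y : 'I_V, exists2 A, A \in F & (x \in A) && (y \in A).
Proof.
move=> hV [_ Fc] x y.
have pairP : forall a b : 'I_V, a != b -> exists2 A, A \in F & (a \in A) && (b \in A).
  move=> a b ab; have [|A AF PA] := Fc [set a; b]; first by rewrite cards2 ab.
  by exists A => //; rewrite (subsetP PA _ (set21 a b)) (subsetP PA _ (set22 a b)).
case: (eqVneq x y) => [<-|]; last exact: pairP.
have zlt : ((val x == 0) : nat) < V by case: (val x == 0) => //=; apply: leq_trans hV.
have zx : Ordinal zlt != x.
  apply/negP => /eqP /(congr1 val) /=; case: eqP => [->|xn] //= E.
  by apply: xn; rewrite -E.
have [A AF /andP[_ xA]] := pairP _ _ zx.
by exists A => //; rewrite xA.
Qed.

Lemma cover_to_gc {m : nat} (v k : 'I_m -> nat) (i0 : 'I_m) (F' : seq {set 'I_(v i0)}) :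
  (forall i, k i0 <= k i) -> (forall i, k i <= v i) -> (forall i, v i <= v i0) ->
  2 <= k i0 -> is_cover (v i0) (k i0) F' ->
  exists F : seq {set ground v}, size F = size F' /\ is_GC v k F.
Proof.
move=> hk hkv hv h2 cov.
have hV : 2 <= v i0 by apply: leq_trans h2 (hkv i0).
pose S i (A : {set 'I_(v i0)}) := [set y : 'I_(v i) | widen_ord (hv i) y \in A].
have cS : forall i A, #|S i A| <= #|A|.
  move=> i A; rewrite -(card_imset _ (f := widen_ord (hv i))); last first.
    by move=> a b E; apply: val_inj; exact: (congr1 val E).
  by apply: subset_leq_card; apply/subsetP => z /imsetP[y]; rewrite inE => yA ->.
have ex : forall i (A : {set 'I_(v i0)}), exists C : {set 'I_(v i)},
    ((#|A| <= k i0) ==> (S i A \subset C)) && (#|C| == k i).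
  move=> i A; case: (boolP (#|A| <= k i0)) => hA /=.
    apply: ext_set; last by rewrite card_ord.
    exact: leq_trans (cS i A) (leq_trans hA (hk i)).
  have [C /andP[_ cC]] : exists C : {set 'I_(v i)}, (set0 \subset C) && (#|C| == k i).
    by apply: ext_set; rewrite ?card_ord ?cards0.
  by exists C.
pose C i A := xchoose (ex i A).
pose G A : {set ground v} := [set x | tagged x \in C (tag x) A].
exists (map G F'); split; first by rewrite size_map.
split.
  move=> B /mapP[A AF ->] i; rewrite card_part_inj.
  have -> : [set y | inj v i y \in G A] = C i A by apply/setP => y; rewrite !inE.
  by have /andP[_ /eqP] := xchooseP (ex i A).
move=> T [_ cT]; move/eqP: cT => /cards2P[p [q [_ ->]]].
have [A AF /andP[pA qA]] := @cover_pairs _ _ _ hV cov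
   (widen_ord (hv (tag p)) (tagged p)) (widen_ord (hv (tag q)) (tagged q)).
exists (G A); first by apply: map_f.
have KA : #|A| <= k i0 by rewrite (proj1 cov A AF).
have inG : forall r, widen_ord (hv (tag r)) (tagged r) \in A -> r \in G A.
  move=> r rA; rewrite inE; have /andP[H _] := xchooseP (ex (tag r) A).
  by move/implyP: H => /(_ KA) /subsetP; apply; rewrite inE.
by apply/subsetP => z /set2P[] ->; apply: inG.
Qed.

Theorem corollary3p19 (m : nat) (v k : 'I_m -> nat) (i0 : 'I_m) :
  (forall i, 0 < k i) ->
  (forall i, k i <= v i) ->
  (forall i, v i <= v i0) ->
  (forall i, k i0 <= k i) ->
  2 <= k i0 ->
  exists c, is_GC_number v k c /\ is_covering_number (v i0) (k i0) c.
Proof.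
move=> _ hkv hv hk h2.
have cov0 : is_cover (v i0) (k i0) (enum [set B : {set 'I_(v i0)} | #|B| == k i0]).
  split; first by move=> B; rewrite mem_enum inE => /eqP.
  move=> P cP; have [B /andP[PB cB]] : exists B : {set 'I_(v i0)}, (P \subset B) && (#|B| == k i0).
    by apply: ext_set; rewrite ?cP ?card_ord.
  by exists B => //; rewrite mem_enum inE.
have [c [[F [sF cF]] minc]] := min_exists
   (fun c => exists F : seq {set 'I_(v i0)}, size F = c /\ is_cover (v i0) (k i0) F)
   _ (ex_intro _ _ (conj erefl cov0)).
exists c; split; last first.
  split; first by exists F.
  by move=> F' cF'; apply: minc; exists F'.
split.
  have [G [sG gG]] := @cover_to_gc _ _ _ _ _ hk hkv hv h2 cF.
  by exists G; rewrite sG.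
move=> G gG; rewrite -(size_map (fun B : {set ground v} => [set y | inj v i0 y \in B]) G).
by apply: minc; eexists; split; last exact: (@gc_to_cover _ _ _ _ _ hk h2 gG).
Qed.
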